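(* Assume Assumptions A, B, C, D hold, let $w^{(t)}$ be generated by Algorithm 2 with $\eta^{(t)}=D\sqrt{\varepsilon}$ ($D>0$), and suppose $\alpha_i^{(t)}\le\alpha/L_\phi$ for some $\alpha\in(0,\tfrac14)$. Then for all $i\in[n]$ and $0\le t<T$, $$\|h(w^{(t+1)};i)-h_i^*\|^2\le(1+\varepsilon)\|h(w^{(t)};i)-h_i^*\|^2-2(1-4\alpha)\alpha_i^{(t)}\big[\phi_i(h(w^{(t)};i))-\phi_i(h_i^* )\big]+\varepsilon(4\varepsilon+3)\Big[D^2H^2+c\big(2+(V+\varepsilon^2+2)GD^2\big)^2\Big]+\frac{4\varepsilon+3}{\varepsilon}\big\|\eta^{(t)}H_i^{(t)}v_{*\mathrm{reg}}^{(t)}-\alpha_i^{(t)}\nabla\phi_i(h(w^{(t)};i))\big\|^2.$$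
   Context: Let $n,c,d$ be positive integers and $[n]=\{1,\dots,n\}$. For each $i\in[n]$ let $h(\cdot;i):\mathbb{R}^d\to\mathbb{R}^c$ (components $h_j(\cdot;i)$) and $\phi_i:\mathbb{R}^c\to\mathbb{R}$. Each $\phi_i$ attains its minimum at $h_i^*$. Norms: Euclidean for vectors, operator for matrices. Assumption A: each $\phi_i$ is convex, bounded below, and $L_\phi$-smooth. Assumption B: each $h(\cdot;i)$ is twice continuously differentiable and there is $G>0$ with $\|\nabla_w^2 h_j(w;i)\|\le G$ for all $w,i,j$. Iteration setup: given $\varepsilon>0$, $\eta^{(t)}>0$, $\alpha_i^{(t)}>0$ and iterates $w^{(t)}$, let $H_i^{(t)}$ be the Jacobian of $h(\cdot;i)$ at $w^{(t)}$, $\Phi^{(t)}(v)=\frac{1}{2n}\sum_{i=1}^n\|\eta^{(t)}H_i^{(t)}v-\alpha_i^{(t)}\nabla\phi_i(h(w^{(t)};i))\|^2$, $\Psi^{(t)}(v)=\Phi^{(t)}(v)+\frac{\varepsilon^2}{2}\|v\|^2$, $v_{*\mathrm{reg}}^{(t)}$ its unique minimizer. Algorithm 2: $w^{(0)}$ arbitrary, $w^{(t+1)}=w^{(t)}-\eta^{(t)}v^{(t)}$ where $\|v^{(t)}-v_{*\mathrm{reg}}^{(t)}\|\le\varepsilon$, $t=0,\dots,T-1$. Assumption C (constant $V>0$): for each $0\le t<T$ there is $\hat v^{(t)}$ with $\|\hat v^{(t)}\|^2\le V$ and $\Phi^{(t)}(\hat v^{(t)})\le\varepsilon^2$. Assumption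 D (constant $H>0$): $\|H_i^{(t)}\|\le H/\sqrt\varepsilon$ for all $i\in[n]$, $0\le t<T$. *)

(* Defs.v *)
From HB Require Import structures.
From mathcomp Require Import all_boot all_order all_algebra.
From mathcomp Require Import all_classical all_reals all_analysis.
Set Implicit Arguments. Unset Strict Implicit. Unset Printing Implicit Defensive.
Import Order.TTheory GRing.Theory Num.Theory.
Import numFieldNormedType.Exports.
Local Open Scope ring_scope.
Local Open Scope classical_set_scope.

Section Defs.
Variable R : realType.

(* Euclidean norm of a row vector (the library norm on 'rV is the max norm). *)
Definition enorm k (v : 'rV[R]_k) : R := Num.sqrt (\sum_(j < k) (v ord0 j) ^+ 2).

Definition opnorm m k (A : 'M[R]_(m, k)) : R :=
  sup [set enorm (x *m A) | x in [set x : 'rV[R]_m | enorm x <= 1]].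

(* scalar function viewed as 'rV_1-valued, to use the library jacobian *)
Definition liftR k (g : 'rV[R]_k -> R) : 'rV[R]_k -> 'rV[R]_1 :=
  fun x => \row_(_ < 1) g x.

Definition grad k (g : 'rV[R]_k -> R) (x : 'rV[R]_k) : 'rV[R]_k :=
  (jacobian (liftR g) x)^T.

Definition hess k (g : 'rV[R]_k -> R) (x : 'rV[R]_k) : 'M[R]_k :=
  jacobian (grad g) x.

Definition C2 k (g : 'rV[R]_k -> R) : Prop :=
  (forall x, differentiable (liftR g) x) /\
  (forall x, differentiable (grad g) x) /\
  continuous (hess g).

Definition convex_fun k (g : 'rV[R]_k -> R) : Prop :=
  forall (x y : 'rV[R]_k) (s : R), 0 <= s -> s <= 1 ->
    g (s *: x + (1 - s) *: y) <= s * g x + (1 - s) * g y.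

Definition bounded_below k (g : 'rV[R]_k -> R) : Prop :=
  exists m : R, forall x, m <= g x.

Definition smooth_with k (L : R) (g : 'rV[R]_k -> R) : Prop :=
  (forall x, differentiable (liftR g) x) /\
  (forall x y, enorm (grad g x - grad g y) <= L * enorm (x - y)).

(* Phi^(t)(v) = 1/(2n) sum_i || eta H_i v - alpha_i grad phi_i(h(w;i)) ||^2,
   with H_i v written in the library's row convention v *m jacobian. *)
Definition PhiT n d c (h : 'I_n -> 'rV[R]_d -> 'rV[R]_c)
  (phi : 'I_n -> 'rV[R]_c -> R) (eta : R) (alpha : 'I_n -> R)
  (w : 'rV[R]_d) (v : 'rV[R]_d) : R :=
  (2 * n%:R)^-1 * \sum_(i < n)
     enorm (eta *: (v *m jacobian (h i) w) - alpha i *: grad (phi i) (h i w)) ^+ 2.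

Definition PsiT n d c (h : 'I_n -> 'rV[R]_d -> 'rV[R]_c)
  (phi : 'I_n -> 'rV[R]_c -> R) (eta : R) (alpha : 'I_n -> R)
  (eps : R) (w : 'rV[R]_d) (v : 'rV[R]_d) : R :=
  PhiT h phi eta alpha w v + eps ^+ 2 / 2 * enorm v ^+ 2.

End Defs.

(* Main.v *)
Require Import Defs.
From HB Require Import structures.
From mathcomp Require Import all_boot all_order all_algebra.
From mathcomp Require Import all_classical all_reals all_analysis.
Import Order.TTheory GRing.Theory Num.Theory.
Import numFieldNormedType.Exports.
From mathcomp Require Import ring lra.
Local Open Scope classical_set_scope.
Local Open Scope ring_scope.



Definition dot {R : realType} {k} (u v : 'rV[R]_k) : R := \sum_(j < k) u ord0 j * v ord0 j.

Lemma dotC {R : realType} {k} (u v : 'rV[R]_k) : dot u v = dot v u.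
Proof. by apply: eq_bigr => j _; rewrite mulrC. Qed.

Lemma dotDl {R : realType} {k} (u v x : 'rV[R]_k) : dot (u + v) x = dot u x + dot v x.
Proof. by rewrite /dot -big_split; apply: eq_bigr => j _; rewrite mxE mulrDl. Qed.

Lemma dotZl {R : realType} {k} a (u x : 'rV[R]_k) : dot (a *: u) x = a * dot u x.
Proof. by rewrite /dot mulr_sumr; apply: eq_bigr => j _; rewrite mxE mulrA. Qed.

Lemma dotNl {R : realType} {k} (u x : 'rV[R]_k) : dot (- u) x = - dot u x.
Proof. by rewrite -scaleN1r dotZl mulN1r. Qed.

Lemma dotBl {R : realType} {k} (u v x : 'rV[R]_k) : dot (u - v) x = dot u x - dot v x.
Proof. by rewrite dotDl dotNl. Qed.

Lemma dotDr {R : realType} {k} (u v x : 'rV[R]_k) : dot x (u + v) = dot x u + dot x v.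
Proof. by rewrite dotC dotDl !(dotC x). Qed.
Lemma dotZr {R : realType} {k} a (u x : 'rV[R]_k) : dot x (a *: u) = a * dot x u.
Proof. by rewrite dotC dotZl dotC. Qed.
Lemma dotNr {R : realType} {k} (u x : 'rV[R]_k) : dot x (- u) = - dot x u.
Proof. by rewrite dotC dotNl dotC. Qed.
Lemma dotBr {R : realType} {k} (u v x : 'rV[R]_k) : dot x (u - v) = dot x u - dot x v.
Proof. by rewrite dotDr dotNr. Qed.

Lemma dot_ge0 {R : realType} {k} (u : 'rV[R]_k) : 0 <= dot u u.
Proof. by apply: sumr_ge0 => j _; rewrite -expr2 sqr_ge0. Qed.

Lemma enorm_ge0 {R : realType} {k} (u : 'rV[R]_k) : 0 <= enorm u.
Proof. exact: sqrtr_ge0. Qed.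

Lemma enorm2 {R : realType} {k} (u : 'rV[R]_k) : enorm u ^+ 2 = dot u u.
Proof.
rewrite /enorm sqr_sqrtr; last by apply: sumr_ge0 => j _; rewrite sqr_ge0.
by apply: eq_bigr => j _; rewrite expr2.
Qed.

Lemma enormZ {R : realType} {k} a (u : 'rV[R]_k) : enorm (a *: u) = `|a| * enorm u.
Proof.
apply: (@pexpIrn _ 2) => //; rewrite ?nnegrE ?mulr_ge0 ?enorm_ge0 //.
by rewrite exprMn !enorm2 dotZl dotZr mulrA -expr2 real_normK ?num_real.
Qed.

Lemma enormN {R : realType} {k} (u : 'rV[R]_k) : enorm (- u) = enorm u.
Proof. by rewrite -scaleN1r enormZ normrN1 mul1r. Qed.

Lemma dot_le {R : realType} {k} (u v : 'rV[R]_k) : dot u v <= enorm u * enorm v.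
Proof.
set a := enorm u; set b := enorm v.
have a0 : 0 <= a by exact: enorm_ge0.
have b0 : 0 <= b by exact: enorm_ge0.
have H1 : 0 <= dot (b *: u - a *: v) (b *: u - a *: v) by exact: dot_ge0.
rewrite !(dotBl, dotBr, dotZl, dotZr) -!enorm2 -/a -/b (dotC v u) in H1.
have H2 : a * b * (2 * (a * b - dot u v)) >= 0 by nra.
have [ab0|ab0] := eqVneq (a * b) 0.
  have zero_of (x y : 'rV[R]_k) : enorm x = 0 -> dot x y = 0.
    move=> ex; have xx : dot x x = 0 by rewrite -enorm2 ex expr2 mulr0.
    have /psumr_eq0P H0 := xx.
    rewrite /dot big1 // => j _.
    have := H0 (ltac:(by move=> *; rewrite -expr2 sqr_ge0)) j isT.
    by move/eqP; rewrite mulf_eq0 orbb => /eqP ->; rewrite mul0r.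
  move: ab0 => /eqP; rewrite mulf_eq0 => /orP[] /eqP a0'.
  - by rewrite zero_of // mulr_ge0.
  - by rewrite dotC zero_of // mulr_ge0.
have abp : 0 < a * b by rewrite lt_def ab0 mulr_ge0.
nra.
Qed.

Lemma dot_abs_le {R : realType} {k} (u v : 'rV[R]_k) : `|dot u v| <= enorm u * enorm v.
Proof.
rewrite ler_norml dot_le andbT.
have := dot_le (- u) v; rewrite dotNl enormN; lra.
Qed.

Lemma young_sq {R : realType} {k} (e : R) (A B : 'rV[R]_k) : 0 < e ->
  enorm (A + B) ^+ 2 <= (1 + e) * enorm A ^+ 2 + (1 + e^-1) * enorm B ^+ 2.
Proof.
move=> e0; rewrite !enorm2 !(dotDl, dotDr) (dotC B A).
have H := dot_ge0 (e *: A - B).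
rewrite !(dotBl, dotBr, dotZl, dotZr) (dotC B A) in H.
have ei : e * e^-1 = 1 by rewrite mulfV // gt_eqF.
have BB := dot_ge0 B.
have : 2 * dot A B <= e * dot A A + e^-1 * dot B B.
  have H' : 0 <= e^-1 * (e * (e * dot A A - dot A B) - (e * dot A B - dot B B)).
    by rewrite mulr_ge0 // invr_ge0 ltW.
  rewrite mulrBr !mulrA mulVf ?gt_eqF // !mul1r in H'.
  nra.
nra.
Qed.

Lemma sq3 {R : realType} {k} (x y z : 'rV[R]_k) :
  enorm (x + y + z) ^+ 2 <= 3 * (enorm x ^+ 2 + enorm y ^+ 2 + enorm z ^+ 2).
Proof.
rewrite !enorm2 !(dotDl, dotDr).
have H1 := dot_ge0 (x - y); have H2 := dot_ge0 (y - z); have H3 := dot_ge0 (x - z).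
rewrite !(dotBl, dotBr) in H1 H2 H3.
rewrite (dotC y x) (dotC z x) (dotC z y) in H1 H2 H3 *.
lra.
Qed.

Lemma sq2 {R : realType} {k} (x y : 'rV[R]_k) :
  enorm (x + y) ^+ 2 <= 2 * enorm x ^+ 2 + 2 * enorm y ^+ 2.
Proof.
rewrite !enorm2 !(dotDl, dotDr).
have H1 := dot_ge0 (x - y).
rewrite !(dotBl, dotBr) (dotC y x) in H1 *.
lra.
Qed.

Lemma enorm2_le_entries {R : realType} {k} (x : 'rV[R]_k) (K : R) :
  (forall j, `|x ord0 j| <= K) -> enorm x ^+ 2 <= k%:R * K ^+ 2.
Proof.
move=> Hx; rewrite enorm2 /dot.
have -> : k%:R * K ^+ 2 = \sum_(j < k) K ^+ 2 by rewrite sumr_const card_ord mulr_natl.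
apply: ler_sum => j _; rewrite -expr2 -real_normK ?num_real //.
by rewrite lerXn2r ?nnegrE ?normr_ge0 // (le_trans _ (Hx j)).
Qed.

Lemma enorm0 {R : realType} {k} : enorm (0 : 'rV[R]_k) = 0.
Proof. by rewrite -(scale0r (0 : 'rV[R]_k)) enormZ normr0 mul0r. Qed.

Lemma mulmx_sq_le {R : realType} {m k} (x : 'rV[R]_m) (A : 'M[R]_(m, k)) :
  enorm (x *m A) ^+ 2 <= enorm x ^+ 2 * \sum_(j < k) enorm (\row_l A l j) ^+ 2.
Proof.
rewrite [X in X <= _]enorm2 /dot mulr_sumr; apply: ler_sum => j _.
have -> : (x *m A) ord0 j = dot x (\row_l A l j).
  by rewrite mxE /dot; apply: eq_bigr => l _; rewrite mxE.
rewrite -expr2 -exprMn -real_normK ?num_real // lerXn2r ?nnegrE ?normr_ge0 ?mulr_ge0 ?enorm_ge0 //.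
exact: dot_abs_le.
Qed.

Lemma opnorm_le {R : realType} {m k} (x : 'rV[R]_m) (A : 'M[R]_(m, k)) :
  enorm (x *m A) <= opnorm A * enorm x.
Proof.
set M := \sum_(j < k) enorm (\row_l A l j) ^+ 2.
have M0 : 0 <= M by apply: sumr_ge0 => j _; rewrite sqr_ge0.
have hs : has_sup [set enorm (y *m A) | y in [set y : 'rV[R]_m | enorm y <= 1]].
  split.
    exists (enorm (0 *m A)), 0 => //=; by rewrite enorm0 ler01.
  exists (1 + M) => _ [y /= y1 <-].
  have := mulmx_sq_le y A; rewrite -/M => H.
  have ey := enorm_ge0 y; have eyA := enorm_ge0 (y *m A).
  have : enorm y ^+ 2 <= 1 by rewrite -(expr1n _ 2) lerXn2r ?nnegrE.
  nra.
have ub := sup_upper_bound hs.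
have ex0 := enorm_ge0 x.
have [e0|e0] := eqVneq (enorm x) 0.
  have := mulmx_sq_le x A; rewrite e0 expr0n /= mul0r => H.
  have : enorm (x *m A) = 0.
    have h2 : enorm (x *m A) ^+ 2 = 0 by apply: le_anti; rewrite H sqr_ge0.
    by move/eqP: h2; rewrite expf_eq0 /= => /eqP.
  by move=> ->; rewrite mulr0.
have ep : 0 < enorm x by rewrite lt_def e0 ex0.
have E : ((enorm x)^-1 *: x) *m A = (enorm x)^-1 *: (x *m A) by rewrite scalemxAl.
have := ub (enorm (((enorm x)^-1 *: x) *m A)).
rewrite E enormZ ger0_norm ?invr_ge0 // => H.
have : (enorm x)^-1 * enorm (x *m A) <= opnorm A.
  apply: H; exists ((enorm x)^-1 *: x) => //=.
    by rewrite enormZ ger0_norm ?invr_ge0 // mulVf.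
  by rewrite E enormZ ger0_norm ?invr_ge0 // ltW.
move=> H2.
have -> : enorm (x *m A) = enorm x * ((enorm x)^-1 * enorm (x *m A)).
  by rewrite mulrA mulfV ?mul1r // gt_eqF.
by rewrite [_ * enorm x]mulrC ler_pM2l.
Qed.

Lemma line_deriv {R : realType} {k m} (F : 'rV[R]_k -> 'rV[R]_m) (p d : 'rV[R]_k)
  (j : 'I_m) (s : R) :
  differentiable F (p + s *: d) ->
  is_derive s 1 (fun s => F (p + s *: d) ord0 j) ((d *m jacobian F (p + s *: d)) ord0 j).
Proof.
move=> dF.
set G := fun s : R => F (p + s *: d).
have eqf : (fun h : R => h^-1 *: ((G \o shift s) (h *: 1) - G s)) =
   (fun h : R => h^-1 *: ((F \o shift (p + s *: d)) (h *: d) - F (p + s *: d))).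
  apply: funext => h; rewrite /G /=.
  have -> : h%:A = h by rewrite /GRing.scale /= mulr1.
  by rewrite scalerDl addrCA.
have dG : derivable G s 1.
  by rewrite /derivable eqf; apply: diff_derivable.
have DG : 'D_1 G s = d *m jacobian F (p + s *: d).
  by rewrite -deriveEjacobian // /derive eqf.
have dGj := (derivable_mxP G s 1).1 dG ord0 j.
apply: DeriveDef => //.
have := derive_mx dG; rewrite DG => /matrixP /(_ ord0 j) E2.
by rewrite E2 mxE.
Qed.

Lemma line_deriv_real {R : realType} {k} (f : 'rV[R]_k -> R) (p d : 'rV[R]_k) (s : R) :
  differentiable (liftR f) (p + s *: d) ->
  is_derive s 1 (fun s => f (p + s *: d)) (dot d (grad f (p + s *: d))).
Proof.
move=> df.
have := @line_deriv R k 1 (liftR f) p d ord0 s df.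
have -> : (fun s => liftR f (p + s *: d) ord0 ord0) = (fun s => f (p + s *: d)).
  by apply: funext => x; rewrite /liftR mxE.
move=> H; apply: is_derive_eq H _.
rewrite mxE /dot; apply: eq_bigr => l _. by rewrite /grad [in RHS]mxE.
Qed.

Lemma line_deriv_grad {R : realType} {k} (f : 'rV[R]_k -> R) (p d : 'rV[R]_k) (s : R) l :
  differentiable (grad f) (p + s *: d) ->
  is_derive s 1 (fun s => grad f (p + s *: d) ord0 l) ((d *m hess f (p + s *: d)) ord0 l).
Proof. by move=> df; have := @line_deriv R k k (grad f) p d l s df. Qed.
Lemma is_derive_mulc {R : realType} (s b : R) : is_derive s (1:R) (fun x : R => x * b) b.
Proof.
have H : is_derive s (1:R) (@id R * cst b) (s *: 0 + b *: 1).
  apply: is_deriveM.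
by move: H; rewrite scaler0 add0r [b *: 1]mulr1.
Qed.

Lemma is_derive_sq {R : realType} (s : R) : is_derive s (1:R) (fun x : R => x ^+ 2) (2 * s).
Proof.
have H : is_derive s (1:R) (@id R ^+ 2) ((2%:R * s ^+ 1) *: 1).
  apply: is_deriveX.
by move: H; rewrite expr1 [_ *: 1]mulr1.
Qed.

Lemma is_derive_sqc {R : realType} (s c : R) : is_derive s (1:R) (fun x : R => x ^+ 2 * c) (2 * s * c).
Proof.
have H : is_derive s (1:R) ((fun x : R => x ^+ 2) * cst c) (s ^+ 2 *: 0 + c *: (2 * s)).
  apply: is_deriveM; exact: is_derive_sq.
move: H; rewrite scaler0 add0r => H; apply: is_derive_eq H _. change (c * (2 * s) = 2 * s * c); by rewrite mulrC.
Qed.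

Lemma mvt_le {R : realType} (psi dpsi : R -> R) (s0 : R) :
  (forall s, is_derive s (1:R) psi (dpsi s)) -> 0 < s0 ->
  (forall s, 0 < s -> s < s0 -> dpsi s <= 0) -> psi s0 <= psi 0.
Proof.
move=> dp s0p neg.
have cont : {within `[0, s0], continuous psi}.
  apply: derivable_within_continuous => x _.
  exact: (@ex_derive _ _ _ _ _ _ _ (dp x)).
have [c cI E] := MVT s0p (fun x _ => dp x) cont.
have : dpsi c * (s0 - 0) <= 0.
  move: cI; rewrite in_itv /= => /andP[c0 cs].
  by apply: mulr_le0_ge0; [apply: neg | rewrite subr0 ltW].
rewrite -E; lra.
Qed.

Lemma taylor1 {R : realType} (g g1 : R -> R) (K s0 : R) :
  (forall s, is_derive s (1:R) g (g1 s)) -> 0 < s0 ->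
  (forall s, 0 <= s -> `|g1 s - g1 0| <= K * s) ->
  `|g s0 - g 0 - s0 * g1 0| <= K * s0 ^+ 2 / 2.
Proof.
move=> dg s0p Hb.
pose psi := fun s => g s - g 0 - s * g1 0 - s ^+ 2 * (K / 2).
have up : psi s0 <= psi 0.
  apply: (@mvt_le R psi (fun s => g1 s - 0 - g1 0 - 2 * s * (K / 2))) => //.
    move=> s; apply: is_deriveB; last exact: is_derive_sqc.
    apply: is_deriveB; last exact: is_derive_mulc.
  move=> s sp _; have := Hb s (ltW sp); rewrite ler_norml => /andP[_ H]; lra.
pose chi := fun s => s * g1 0 + g 0 - g s - s ^+ 2 * (K / 2).
have lo : chi s0 <= chi 0.
  apply: (@mvt_le R chi (fun s => g1 0 + 0 - g1 s - 2 * s * (K / 2))) => //.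
    move=> s; apply: is_deriveB; last exact: is_derive_sqc.
    apply: is_deriveB.
    apply: is_deriveD; first exact: is_derive_mulc.
  move=> s sp _; have := Hb s (ltW sp); rewrite ler_norml => /andP[H _]; lra.
move: up lo; rewrite /psi /chi => up lo.
rewrite ler_norml; apply/andP; split; nra.
Qed.

Lemma taylor2 {R : realType} (g g1 g2 : R -> R) (K : R) :
  (forall s, is_derive s (1:R) g (g1 s)) ->
  (forall s, is_derive s (1:R) g1 (g2 s)) ->
  (forall s, `|g2 s| <= K) ->
  `|g 1 - g 0 - g1 0| <= K / 2.
Proof.
move=> dg dg1 Hb.
have := @taylor1 R g g1 K 1 dg ltr01.
rewrite mul1r expr1n mulr1; apply.
move=> s s0.
have cont : {within `[0, s], continuous g1}.
  apply: derivable_within_continuous => x _.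
  exact: (@ex_derive _ _ _ _ _ _ _ (dg1 x)).
have [c _ E] := MVT_segment s0 (fun x _ => dg1 x) cont.
rewrite E subr0 normrM (ger0_norm s0).
by apply: ler_wpM2r.
Qed.


Lemma smooth_taylor_s {R : realType} {k} (L : R) (f : 'rV[R]_k -> R) (x d : 'rV[R]_k) (s0 : R) :
  smooth_with L f -> 0 < s0 ->
  `|f (x + s0 *: d) - f x - s0 * dot d (grad f x)| <= L * enorm d ^+ 2 * s0 ^+ 2 / 2.
Proof.
move=> [df lip] s0p.
have dg : forall s, is_derive s (1:R) (fun s => f (x + s *: d)) (dot d (grad f (x + s *: d))).
  by move=> s; apply: line_deriv_real.
have := @taylor1 R (fun s => f (x + s *: d)) (fun s => dot d (grad f (x + s *: d)))
   (L * enorm d ^+ 2) s0 dg s0p.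
rewrite /= scale0r addr0; apply.
move=> s hs.
rewrite -dotBr.
apply: (le_trans (dot_abs_le _ _)).
have H : enorm (grad f (x + s *: d) - grad f x) <= L * (s * enorm d).
  have := lip (x + s *: d) x.
  have -> : x + s *: d - x = s *: d by rewrite addrAC subrr add0r.
  by rewrite enormZ ger0_norm.
have ed := enorm_ge0 d.
apply: (le_trans (ler_wpM2l ed H)).
have -> : L * enorm d ^+ 2 * s = enorm d * (L * (s * enorm d)) by ring.
done.
Qed.

Lemma descent {R : realType} {k} (L : R) (f : 'rV[R]_k -> R) (x xs : 'rV[R]_k) :
  smooth_with L f -> 0 < L -> (forall y, f xs <= f y) ->
  enorm (grad f x) ^+ 2 <= 2 * L * (f x - f xs).
Proof.
move=> sm L0 mn.
set gx := grad f x.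
have := @smooth_taylor_s R k L f x (- (L^-1 *: gx)) 1 sm ltr01.
rewrite scale1r mul1r expr1n mulr1 enormN enormZ dotNl dotZl -enorm2.
have -> : `|L^-1| = L^-1 by rewrite ger0_norm // invr_ge0 ltW.
move=> H.
have H2 := mn (x - L^-1 *: gx).
have Li : L * L^-1 = 1 by rewrite mulfV // gt_eqF.
set G2 := enorm gx ^+ 2 in H *.
have G20 : 0 <= G2 by rewrite sqr_ge0.
move: H; rewrite ler_norml => /andP[_ H].
have E : L * (L^-1 * enorm gx) ^+ 2 / 2 = L^-1 * G2 / 2.
  by rewrite exprMn /G2; field; rewrite gt_eqF.
rewrite E in H.
have Lip : 0 < L^-1 by rewrite invr_gt0.
have : L^-1 * G2 / 2 <= f x - f xs by lra.
move=> H3.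
have H4 := ler_wpM2l (ltW L0) H3.
have E2 : L * (L^-1 * G2 / 2) = G2 / 2 by field; rewrite gt_eqF.
rewrite E2 in H4; lra.
Qed.

Lemma convex_first {R : realType} {k} (L : R) (f : 'rV[R]_k -> R) (x y : 'rV[R]_k) :
  smooth_with L f -> convex_fun f -> 0 < L ->
  dot (y - x) (grad f x) <= f y - f x.
Proof.
move=> sm cv L0.
set d := y - x; set K := L * enorm d ^+ 2.
have key : forall s, 0 < s -> s <= 1 -> dot d (grad f x) <= f y - f x + K * s / 2.
  move=> s s0 s1.
  have := @smooth_taylor_s R k L f x d s sm s0; rewrite ler_norml -/K => /andP[H _].
  have := cv y x s (ltW s0) s1.
  have -> : s *: y + (1 - s) *: x = x + s *: d.
    by rewrite /d scalerBr scalerBl scale1r addrC addrA [x - _ + _]addrAC.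
  move=> H2.
  have : s * dot d (grad f x) <= s * (f y - f x + K * s / 2).
    have E3 : K * s ^+ 2 / 2 = s * (K * s / 2) by rewrite expr2; ring.
    rewrite E3 in H.
    lra.
  by rewrite ler_pM2l.
have K0 : 0 <= K by rewrite /K mulr_ge0 ?sqr_ge0 // ltW.
apply/ler_addgt0Pr => e e0.
set s := e / (K + e + 1).
have den : 0 < K + e + 1 by lra.
have s0 : 0 < s by rewrite divr_gt0.
have s1 : s <= 1 by rewrite ler_pdivrMr // mul1r; lra.
apply: (le_trans (key s s0 s1)); rewrite lerD2l.
rewrite /s ler_pdivrMr ?ltr0n // mulrA ler_pdivrMr //.
nra.
Qed.


Lemma is_derive_cmul {R : realType} (F : R -> R) (c s dF : R) :
  is_derive s (1:R) F dF -> is_derive s (1:R) (fun s => c * F s) (c * dF).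
Proof. by move=> H; have := @is_deriveZ R R R F c s 1 dF H. Qed.

Lemma c2_taylor {R : realType} {k} (f : 'rV[R]_k -> R) (G : R) (w u : 'rV[R]_k) :
  C2 f -> (forall x, opnorm (hess f x) <= G) ->
  `|f (w - u) - f w + dot u (grad f w)| <= G * enorm u ^+ 2 / 2.
Proof.
move=> [d1 [d2 _]] hG.
set p := w; set e := - u.
have dg : forall s, is_derive s (1:R) (fun s => f (p + s *: e)) (dot e (grad f (p + s *: e))).
  by move=> s; apply: line_deriv_real.
have dg1 : forall s, is_derive s (1:R) (fun s => dot e (grad f (p + s *: e)))
                                        (dot e (e *m hess f (p + s *: e))).
  move=> s.
  have H : is_derive s (1:R) (\sum_(l < k) (fun s => e ord0 l * grad f (p + s *: e) ord0 l))
                   (\sum_(l < k) e ord0 l * (e *m hess f (p + s *: e)) ord0 l).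
    apply: is_derive_sum => l.
    apply: is_derive_cmul; exact: line_deriv_grad.
  by move: H; rewrite fct_sumE.
have bd : forall s, `|dot e (e *m hess f (p + s *: e))| <= G * enorm u ^+ 2.
  move=> s; apply: (le_trans (dot_abs_le _ _)).
  rewrite /e enormN.
  have := opnorm_le (- u) (hess f (p + s *: - u)); rewrite enormN => H.
  have := hG (p + s *: - u) => H2.
  have eu := enorm_ge0 u.
  have := enorm_ge0 (- u *m hess f (p + s *: - u)) => H3.
  rewrite expr2; nra.
have := @taylor2 R (fun s => f (p + s *: e)) (fun s => dot e (grad f (p + s *: e))) (fun s => dot e (e *m hess f (p + s *: e))) (G * enorm u ^+ 2) dg dg1 bd.
rewrite scale1r scale0r addr0 /e dotNl /p => H.
by rewrite opprK in H.
Qed.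

Lemma vec_diff {R : realType} {k m} (F : 'rV[R]_k -> 'rV[R]_m) x :
  (forall j, differentiable (liftR (fun y => F y ord0 j)) x) -> differentiable F x.
Proof.
move=> dj.
have -> : F = \sum_(j < m) (fun y => F y ord0 j *: (delta_mx ord0 j : 'rV[R]_m)).
  apply: funext => y; rewrite fct_sumE; apply/rowP => l.
  rewrite summxE (bigD1 l) //= big1 ?addr0.
    by rewrite !mxE eqxx /= mulr1.
  by move=> j jl; rewrite !mxE (eq_sym l j) (negbTE jl) andbF mulr0.
apply: differentiable_sum => j.
apply: differentiableZl.
have -> : (fun y => F y ord0 j) = (fun M : 'M[R]_(1,1) => M ord0 ord0) \o liftR (fun y => F y ord0 j).
  by apply: funext => y; rewrite /= /liftR mxE.
apply: differentiable_comp => //.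
exact: differentiable_coord.
Qed.

Lemma jac_entry {R : realType} {k m} (F : 'rV[R]_k -> 'rV[R]_m) x u j :
  (forall j, differentiable (liftR (fun y => F y ord0 j)) x) ->
  (u *m jacobian F x) ord0 j = dot u (grad (fun y => F y ord0 j) x).
Proof.
move=> dj.
have dF := @vec_diff R k m F x dj.
have E0 := deriveEjacobian u dF.
have E0' := derive_mx (diff_derivable (v:=u) dF).
have E1 := deriveEjacobian u (dj j).
have E2 := derive_mx (diff_derivable (v:=u) (dj j)).
have fe : (fun t => liftR (fun y => F y ord0 j) t ord0 ord0) = (fun t => F t ord0 j).
  by apply: funext => t; rewrite /liftR mxE.
have E3 : ('D_u (liftR (fun y => F y ord0 j)) x) ord0 ord0 = 'D_u (fun t => F t ord0 j) x.
  by rewrite E2 mxE fe.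
have E4 : ('D_u F x) ord0 j = 'D_u (fun t => F t ord0 j) x.
  by rewrite E0' mxE.
rewrite -E0 E4 -E3 E1 mxE /dot; apply: eq_bigr => l _.
by rewrite /grad [in RHS]mxE.
Qed.


Lemma enorm_subZ {R : realType} {k} (A B : 'rV[R]_k) (s : R) :
  enorm (A - s *: B) ^+ 2 = enorm A ^+ 2 - 2 * s * dot A B + s ^+ 2 * enorm B ^+ 2.
Proof. rewrite !enorm2 !(dotBl, dotBr, dotZl, dotZr) (dotC B A); ring. Qed.

Local Close Scope classical_set_scope.

Theorem mainTheorem16 (R : realType) (n c d : nat)
  (h : 'I_n -> 'rV[R]_d -> 'rV[R]_c) (phi : 'I_n -> 'rV[R]_c -> R)
  (hstar : 'I_n -> 'rV[R]_c)
  (Lphi G V H D alpha eps : R) (T : nat)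
  (eta : nat -> R) (alph : nat -> 'I_n -> R)
  (w v vreg : nat -> 'rV[R]_d) :
  (0 < n)%N -> (0 < c)%N -> (0 < d)%N ->
  (* phi_i attains its minimum at hstar i *)
  (forall i x, phi i (hstar i) <= phi i x) ->
  (* Assumption A *)
  (forall i, convex_fun (phi i) /\ bounded_below (phi i) /\ smooth_with Lphi (phi i)) ->
  (* Assumption B *)
  0 < G ->
  (forall i (j : 'I_c), C2 (fun x => h i x ord0 j)) ->
  (forall i (j : 'I_c) x, opnorm (hess (fun y => h i y ord0 j) x) <= G) ->
  (* iteration setup *)
  0 < eps ->
  (forall t, (t < T)%N -> forall i, 0 < alph t i) ->
  (forall t, (t < T)%N -> forall u,
     PsiT h phi (eta t) (alph t) eps (w t) (vreg t)
       <= PsiT h phi (eta t) (alph t) eps (w t) u) ->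
  (* Algorithm 2 *)
  (forall t, (t < T)%N -> w t.+1 = w t - eta t *: v t) ->
  (forall t, (t < T)%N -> enorm (v t - vreg t) <= eps) ->
  (* Assumption C *)
  0 < V ->
  (forall t, (t < T)%N -> exists vhat : 'rV[R]_d,
     enorm vhat ^+ 2 <= V /\ PhiT h phi (eta t) (alph t) (w t) vhat <= eps ^+ 2) ->
  (* Assumption D *)
  0 < H ->
  (forall i t, (t < T)%N -> opnorm (jacobian (h i) (w t)) <= H / Num.sqrt eps) ->
  (* step size and alpha *)
  0 < D ->
  (forall t, (t < T)%N -> eta t = D * Num.sqrt eps) ->
  0 < alpha -> alpha < 1 / 4 ->
  (forall t i, (t < T)%N -> alph t i <= alpha / Lphi) ->
  forall (i : 'I_n) (t : nat), (t < T)%N ->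
    enorm (h i (w t.+1) - hstar i) ^+ 2
    <= (1 + eps) * enorm (h i (w t) - hstar i) ^+ 2
       - 2 * (1 - 4 * alpha) * alph t i * (phi i (h i (w t)) - phi i (hstar i))
       + eps * (4 * eps + 3) *
           (D ^+ 2 * H ^+ 2
            + c%:R * (2 + (V + eps ^+ 2 + 2) * G * D ^+ 2) ^+ 2)
       + (4 * eps + 3) / eps *
           enorm (eta t *: (vreg t *m jacobian (h i) (w t))
                  - alph t i *: grad (phi i) (h i (w t))) ^+ 2.
Proof.
move=> n0 c0 d0 hmin hA G0 hC2 hHess eps0 alph0 hreg alg hv V0 hC H0 hD D0 heta
  a0 a4 halph i t tT.
have ai0 := alph0 t tT i.
have hai := halph t i tT.
have L0 : 0 < Lphi.
  rewrite ltNge; apply/negP => L0.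
  have : alpha / Lphi <= 0 by rewrite pmulr_rle0 // invr_le0.
  lra.
have aiL : alph t i * Lphi <= alpha.
  by move: hai; rewrite ler_pdivlMr.
have [cvx [_ sm]] := hA i.
set W := w t.
set x0 := h i W.
set J := jacobian (h i) W.
set ai := alph t i.
set gp := grad (phi i) x0.
set et := eta t.
set a := x0 - hstar i.
set e := et *: (vreg t *m J) - ai *: gp.
set f := et *: ((v t - vreg t) *m J).
set u := et *: v t.
set r := h i (W - u) - x0 + u *m J.
have Hu : u *m J = e + ai *: gp + f.
  rewrite /u /e /f -scalemxAl mulmxBl scalerBr subrK addrC subrK.
  by rewrite scalemxAl.
have Hid : h i (w t.+1) - hstar i = (a - ai *: gp) + (- e - f + r).
  rewrite alg // -/W -/u.
  move: Hu; rewrite /r /a; move: (u *m J) => uJ ->.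
  apply/rowP => l; rewrite !mxE; ring.
have Bvreg : enorm (vreg t) ^+ 2 <= 2 + V.
  have [vh [Hvh HPhi]] := hC t tT.
  have := hreg t tT vh; rewrite /PsiT.
  have P0 : 0 <= PhiT h phi (eta t) (alph t) (w t) (vreg t).
    rewrite /PhiT mulr_ge0 // ?invr_ge0 ?mulr_ge0 ?ler0n //.
    by apply: sumr_ge0 => l _; rewrite sqr_ge0.
  have e2 : 0 < eps ^+ 2 by rewrite exprn_gt0.
  have nv := sqr_ge0 (enorm (vreg t)).
  move=> H1.
  have H2 : eps ^+ 2 / 2 * enorm vh ^+ 2 <= eps ^+ 2 / 2 * V.
    by rewrite ler_wpM2l // divr_ge0 // ltW.
  nra.
have Bv : enorm (v t) ^+ 2 <= 2 * (2 + V) + 2 * eps ^+ 2.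
  have -> : v t = vreg t + (v t - vreg t) by rewrite addrC subrK.
  apply: (le_trans (sq2 _ _)).
  have := hv t tT => H1.
  have : enorm (v t - vreg t) ^+ 2 <= eps ^+ 2.
    by rewrite lerXn2r ?nnegrE ?enorm_ge0 // ltW.
  lra.
have se0 : 0 < Num.sqrt eps by rewrite sqrtr_gt0.
have Het : et = D * Num.sqrt eps by rewrite /et heta.
have et0 : 0 < et by rewrite Het mulr_gt0.
have Bf : enorm f ^+ 2 <= D ^+ 2 * H ^+ 2 * eps ^+ 2.
  have : enorm f <= D * H * eps.
    rewrite /f enormZ (ger0_norm (ltW et0)).
    have H1 := opnorm_le (v t - vreg t) J.
    have H2 := hD i t tT; rewrite -/W -/J in H2.
    have H3 := hv t tT.
    have o0 : 0 <= enorm (v t - vreg t) := enorm_ge0 _.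
    have H4 : opnorm J * enorm (v t - vreg t) <= H / Num.sqrt eps * eps.
      apply: (le_trans (ler_wpM2r o0 H2)).
      by rewrite ler_wpM2l // divr_ge0 // ltW.
    have H5 : et * enorm ((v t - vreg t) *m J) <= et * (H / Num.sqrt eps * eps).
      by apply: ler_wpM2l; [exact: ltW | exact: le_trans H1 H4].
    apply: (le_trans H5); rewrite Het.
    have -> : D * Num.sqrt eps * (H / Num.sqrt eps * eps) = D * H * eps.
      by field; rewrite gt_eqF.
    done.
  move=> H1; rewrite -!exprMn lerXn2r ?nnegrE ?enorm_ge0 // mulr_ge0 // ?mulr_ge0 // ltW //.
set X := (V + eps ^+ 2 + 2) * G * D ^+ 2.
have X0 : 0 <= X.
  rewrite /X; have := sqr_ge0 D; have := sqr_ge0 eps => ? ?.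
  apply: mulr_ge0; last done. apply: mulr_ge0; last exact: ltW. lra.
have Bu : G * enorm u ^+ 2 / 2 <= eps * X.
  rewrite /u enormZ (ger0_norm (ltW et0)) exprMn Het exprMn sqr_sqrtr; last exact: ltW.
  rewrite /X.
  have := sqr_ge0 D => D2.
  have : 0 <= G * D ^+ 2 * eps by rewrite !mulr_ge0 // ltW.
  move=> P.
  have := ler_wpM2l P Bv => Q.
  lra.
have Br : enorm r ^+ 2 <= c%:R * (eps * X) ^+ 2.
  apply: enorm2_le_entries => j.
  have Ej : (u *m J) ord0 j = dot u (grad (fun y => h i y ord0 j) W).
    exact: jac_entry (fun l => (hC2 i l).1 W).
  have Er : r ord0 j = h i (W - u) ord0 j - h i W ord0 j + (u *m J) ord0 j.
    by rewrite /r /x0 !mxE.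
  rewrite Er Ej.
  have := @c2_taylor R d (fun y => h i y ord0 j) G W u (hC2 i j) (hHess i j).
  move=> H1; exact: le_trans H1 Bu.
have Bconv := @convex_first R c Lphi (phi i) x0 (hstar i) sm cvx L0.
have Bdesc := @descent R c Lphi (phi i) x0 (hstar i) sm L0 (hmin i).
rewrite -/gp in Bconv Bdesc.
set Dl := phi i x0 - phi i (hstar i).
have Dl0 : 0 <= Dl by rewrite /Dl subr_ge0 hmin.
have Bag : enorm (a - ai *: gp) ^+ 2 <= enorm a ^+ 2 - 2 * ai * Dl + 2 * alpha * ai * Dl.
  have Ea : dot a gp = - dot (hstar i - x0) gp by rewrite -dotNl opprB.
  rewrite enorm_subZ Ea.
  have H1 : ai * (ai * enorm gp ^+ 2) <= ai * (ai * (2 * Lphi * Dl)).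
    apply: ler_wpM2l; first exact: ltW.
    apply: ler_wpM2l; first exact: ltW.
    exact: Bdesc.
  have H2 : ai * (ai * Lphi) * Dl <= ai * alpha * Dl.
    apply: ler_wpM2r => //; apply: ler_wpM2l; [exact: ltW | exact: aiL].
  have H3 : ai * dot (hstar i - x0) gp <= ai * (phi i (hstar i) - phi i x0).
    apply: ler_wpM2l; [exact: ltW | exact: Bconv].
  rewrite /Dl in H1 H2 *.
  nra.
rewrite Hid.
have Y := @young_sq R c eps (a - ai *: gp) (- e - f + r) eps0.
have S3 := sq3 (- e) (- f) r; rewrite !enormN in S3.
set k := eps^-1 in Y *.
have k0 : 0 < k by rewrite /k invr_gt0.
have ek : eps * k = 1 by rewrite /k mulfV // gt_eqF.
have Ek : (4 * eps + 3) / eps = 4 + 3 * k by rewrite /k; field; rewrite gt_eqF.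
rewrite Ek.
set Q := enorm (a - ai *: gp) ^+ 2 in Y Bag *.
set B2 := enorm (- e - f + r) ^+ 2 in Y S3 *.
set E2 := enorm e ^+ 2 in S3 *.
set F2 := enorm f ^+ 2 in S3 Bf *.
set R2 := enorm r ^+ 2 in S3 Br *.
set A2 := enorm a ^+ 2 in Bag *.
set DH := D ^+ 2 * H ^+ 2 in Bf *.
set Z := c%:R * (2 + X) ^+ 2.
have E20 : 0 <= E2 by rewrite sqr_ge0.
have ke2 : k * eps ^+ 2 = eps by rewrite expr2 mulrA (mulrC k) ek mul1r.
have L2 : (1 + k) * B2 <= (1 + k) * (3 * (E2 + F2 + R2)).
  by apply: ler_wpM2l => //; lra.
have L3 : (1 + eps) * Q <= (1 + eps) * (A2 - 2 * ai * Dl + 2 * alpha * ai * Dl).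
  by apply: ler_wpM2l => //; lra.
have RZ : R2 <= eps ^+ 2 * Z.
  apply: (le_trans Br); rewrite /Z exprMn mulrCA; apply: ler_wpM2l; first exact: sqr_ge0.
  apply: ler_wpM2l; first exact: ler0n.
  rewrite lerXn2r ?nnegrE //; lra.
have L4 : (1 + k) * F2 <= DH * eps ^+ 2 + DH * eps.
  have : (1 + k) * F2 <= (1 + k) * (DH * eps ^+ 2) by apply: ler_wpM2l => //; lra.
  move=> H1; apply: (le_trans H1).
  rewrite mulrDl mul1r.
  have -> : k * (DH * eps ^+ 2) = DH * eps by rewrite mulrCA ke2.
  done.
have L5 : (1 + k) * R2 <= eps ^+ 2 * Z + eps * Z.
  have : (1 + k) * R2 <= (1 + k) * (eps ^+ 2 * Z) by apply: ler_wpM2l => //; lra.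
  move=> H1; apply: (le_trans H1).
  by rewrite mulrDl mul1r (mulrA k) ke2.
have L6 : (1 + k) * E2 <= E2 + k * E2 by rewrite mulrDl mul1r.
set P := ai * Dl.
have P0 : 0 <= P by rewrite mulr_ge0 // ltW.
have h1 : 0 <= eps * P * (1 - alpha) by rewrite !mulr_ge0 // ?ltW //; lra.
have h2 : 0 <= alpha * P by rewrite mulr_ge0 // ltW.
have Z0 : 0 <= Z by rewrite /Z mulr_ge0 ?ler0n ?sqr_ge0.
have DH0 : 0 <= DH by rewrite /DH mulr_ge0 ?sqr_ge0.
have e1 : 2 * (1 - 4 * alpha) * ai * Dl = 2 * (1 - 4 * alpha) * P by rewrite /P !mulrA.
have e2 : (1 + eps) * (A2 - 2 * ai * Dl + 2 * alpha * ai * Dl)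
   = (1 + eps) * A2 - 2 * (1 + eps) * P + 2 * alpha * (1 + eps) * P by rewrite /P; ring.
rewrite e1; rewrite e2 in L3.
have h3 : 0 <= eps ^+ 2 * DH by rewrite mulr_ge0 ?sqr_ge0.
have h4 : 0 <= eps ^+ 2 * Z by rewrite mulr_ge0 ?sqr_ge0.
have h5 : 0 <= k * E2 by rewrite mulr_ge0 // ltW.
lra.
Qed.
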